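(* For every positive integer $n$, $$\sum_{j=1}^{n}\csc^4\left(\frac{(2j-1)\pi}{4n+2}\right) = \frac{8(n+1)n(n^2+n+1)}{3}.$$ *)

(* Defs.v *)
From Stdlib Require Import Reals.
Open Scope R_scope.

Definition csc (x : R) : R := / sin x.

(* Main.v *)
Require Import Defs.
From Stdlib Require Import Reals.
Open Scope R_scope.
From Stdlib Require Import Lra Lia Psatz.
From mathcomp Require Import all_boot all_algebra.
From mathcomp Require Import Rstruct.
Import GRing.Theory.
Open Scope R_scope.
Definition r2 : R := 2.
Definition r4 : R := 4.
Local Open Scope ring_scope.
Fixpoint Wp (k : nat) : {poly R} * {poly R} :=
  match k with 0 => (1, 1) | k.+1 => let (a, b) := Wp k in (b, (r2%:P - r4%:P * 'X) * b - a) end.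
Definition W k := (Wp k).1.
Lemma WS k : W k.+2 = (r2%:P - r4%:P * 'X) * W k.+1 - W k.
Proof. rewrite /W /=. by case: (Wp k). Qed.
Lemma W0 : W 0 = 1. Proof. by []. Qed.
Lemma W1 : W 1 = 1. Proof. by []. Qed.
Close Scope ring_scope.
Open Scope R_scope.
Lemma wS k s : horner (W k.+2) s = (2 - 4 * s) * horner (W k.+1) s - horner (W k) s.
Proof. rewrite WS !hornerE. rewrite -!RmultE. rewrite -!RoppE -!RplusE. unfold Rminus. reflexivity. Qed.
Lemma w01 s : horner (W 0) s = 1 /\ horner (W 1) s = 1.
Proof. by rewrite W0 W1 !hornerE. Qed.
Lemma r2I : r2 = INR 2. Proof. unfold r2; simpl; ring. Qed.
Lemma r4I : r4 = INR 4. Proof. unfold r4; simpl; ring. Qed.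

Lemma wtrig k x : cos x * horner (W k) (pow (sin x) 2) = cos ((2 * INR k - 1) * x).
Proof.
  cut (cos x * horner (W k) (pow (sin x) 2) = cos ((2 * INR k - 1) * x) /\
       cos x * horner (W (S k)) (pow (sin x) 2) = cos ((2 * INR (S k) - 1) * x)).
  { tauto. }
  induction k as [|k [IH1 IH2]].
  - destruct (w01 (pow (sin x) 2)) as [-> ->]. simpl.
    replace ((2 * 0 - 1) * x) with (- x) by ring. rewrite cos_neg.
    replace ((2 * 1 - 1) * x) with x by ring. split; ring.
  - split; [exact IH2|].
    rewrite wS.
    set s := pow (sin x) 2. set a := horner (W (S k)) s. set b := horner (W k) s.
    assert (E: forall c : R, c * ((2 - 4 * s) * a - b) = (2 - 4 * s) * (c * a) - c * b) by (intro; ring).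
    rewrite E. unfold a, b. rewrite IH2 IH1. unfold s. rewrite !S_INR.
    set A := (2 * INR k + 1) * x.
    replace ((2 * (INR k + 1) - 1) * x) with A by (unfold A; ring).
    replace ((2 * INR k - 1) * x) with (A - 2 * x) by (unfold A; ring).
    replace ((2 * (INR k + 1 + 1) - 1) * x) with (A + 2 * x) by (unfold A; ring).
    rewrite cos_plus cos_minus cos_2a_sin. ring.
Qed.

Open Scope R_scope.
Definition th (n k : nat) : R := (2 * INR (k + 1) - 1) * PI / (4 * INR n + 2).

Lemma th_eq n k : th n k = (2 * INR k + 1) * (PI / (4 * INR n + 2)).
Proof. unfold th. rewrite plus_INR. simpl INR. unfold Rdiv. ring. Qed.

Lemma PI2_eq n : PI / 2 = (2 * INR n + 1) * (PI / (4 * INR n + 2)).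
Proof. assert (0 <= INR n) by apply pos_INR. field. lra. Qed.

Lemma u_pos n : 0 < PI / (4 * INR n + 2).
Proof. assert (0 <= INR n) by apply pos_INR. apply Rdiv_lt_0_compat. apply PI_RGT_0. lra. Qed.

Lemma th_bounds n k : (k < n)%coq_nat -> 0 < th n k /\ th n k < PI / 2.
Proof.
  intro H. rewrite th_eq (PI2_eq n).
  assert (INR k + 1 <= INR n). { rewrite <- S_INR. apply le_INR. lia. }
  assert (0 <= INR k) by apply pos_INR. pose proof (u_pos n). split; nra.
Qed.

Lemma sin_lt n k j : (k < j)%coq_nat -> (j < n)%coq_nat -> sin (th n k) < sin (th n j).
Proof.
  intros H1 H2. pose proof (th_bounds n k ltac:(lia)). pose proof (th_bounds n j H2).
  pose proof PI_RGT_0.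
  apply sin_increasing_1; try lra.
  rewrite !th_eq. pose proof (u_pos n).
  assert (INR k < INR j) by (apply lt_INR; lia). nra.
Qed.

Lemma sin_pos n k : (k < n)%coq_nat -> 0 < sin (th n k).
Proof. intro H. pose proof (th_bounds n k H). pose proof PI2_Rlt_PI. apply sin_gt_0; lra. Qed.

Lemma W_root n k : (k < n)%coq_nat -> horner (W (S n)) (pow (sin (th n k)) 2) = 0.
Proof.
  intro H. pose proof (th_bounds n k H).
  assert (cos (th n k) > 0). { apply cos_gt_0; pose proof PI_RGT_0; lra. }
  pose proof (wtrig (S n) (th n k)) as E.
  assert (Hc : cos ((2 * INR (S n) - 1) * th n k) = 0).
  { apply cos_eq_0_1. exists (Z.of_nat k). rewrite <- INR_IZR_INZ.
    rewrite th_eq S_INR. assert (0 <= INR n) by apply pos_INR. field. lra. }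
  rewrite Hc in E.
  destruct (Rmult_integral _ _ E); [lra | assumption].
Qed.

Lemma csc4 t : sin t <> 0 -> pow (csc t) 4 = pow (/ pow (sin t) 2) 2.
Proof. intro. unfold csc. field. auto. Qed.

Lemma sum_f_big (f : nat -> R) m : sum_f_R0 f m = (\sum_(0 <= k < m.+1) f k)%R.
Proof.
  induction m as [|m IH]; simpl.
  - rewrite big_nat1. reflexivity.
  - rewrite IH (big_nat_recr m.+1). reflexivity. by [].
Qed.
Lemma sq_neq n a b : (a < b)%coq_nat -> (b < n)%coq_nat -> pow (sin (th n a)) 2 <> pow (sin (th n b)) 2.
Proof. intros. pose proof (sin_lt n a b H H0). pose proof (sin_pos n a ltac:(lia)). simpl. nra. Qed.
Lemma r8I : (8:R) = INR 8. Proof. simpl; ring. Qed.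
Lemma r3I : (3:R) = INR 3. Proof. simpl; ring. Qed.
Lemma sin_neq0 n k : (k < n)%coq_nat -> sin (th n k) <> 0.
Proof. intro H. pose proof (sin_pos n k H). lra. Qed.

Close Scope R_scope.
From mathcomp Require Import all_order ring.
Import Order.TTheory GRing.Theory Num.Theory.
Local Open Scope ring_scope.
Lemma r2E : r2 = 2%:R. Proof. by rewrite r2I INRE. Qed.
Lemma r4E : r4 = 4%:R. Proof. by rewrite r4I INRE. Qed.
Lemma coefWS k i : (W k.+2)`_i = 2%:R * (W k.+1)`_i - 4%:R * (if i is j.+1 then (W k.+1)`_j else 0) - (W k)`_i.
Proof.
rewrite WS mulrBl -mulrA coefB coefB coefCM coefCM coefXM r2E r4E. by case: i.
Qed.
Lemma sizeW k : (size (W k) <= k.+1)%N /\ (size (W k.+1) <= k.+1)%N.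
Proof.
elim: k => [|k [IH1 IH2]]; first by rewrite W0 W1 size_poly1.
split; first by apply: leq_trans IH2 _.
rewrite WS. apply: leq_trans (size_polyD _ _) _. rewrite size_polyN geq_max.
apply/andP; split; last by apply: leq_trans IH1 _; apply: leqnSn.
apply: leq_trans (size_mul_leq _ _) _.
have h : (size ((r2%:P - r4%:P * 'X)%R : {poly R}) <= 2)%N.
  apply: leq_trans (size_polyD _ _) _. rewrite size_polyN geq_max size_polyC.
  apply/andP; split; first by case: (r2 != 0).
  apply: leq_trans (size_mul_leq _ _) _. rewrite size_polyC size_polyX. by case: (r4 != 0).
move: h IH2. case: (size _) => [|a]; case: (size _) => [|b] //=; lia.
Qed.
Lemma coefW k : [/\ (W k)`_0 = 1, (W k)`_1 = - 2%:R * (k%:R - 1) * k%:R &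
   3%:R * (W k)`_2 = 2%:R * (k%:R - 2%:R) * (k%:R - 1) * k%:R * (k%:R + 1)].
Proof.
have P k' : [/\ (W k')`_0 = 1, (W k')`_1 = - 2%:R * (k'%:R - 1) * k'%:R &
   3%:R * (W k')`_2 = 2%:R * (k'%:R - 2%:R) * (k'%:R - 1) * k'%:R * (k'%:R + 1)] /\
  [/\ (W k'.+1)`_0 = 1, (W k'.+1)`_1 = - 2%:R * (k'.+1%:R - 1) * k'.+1%:R &
   3%:R * (W k'.+1)`_2 = 2%:R * (k'.+1%:R - 2%:R) * (k'.+1%:R - 1) * k'.+1%:R * (k'.+1%:R + 1)].
  elim: k' => [|k' [[a0 a1 a2] [b0 b1 b2]]].
    rewrite W0 W1 !coef1 /=. split; split; (try by []); ring.
  split; first by split.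
  rewrite !coefWS a0 a1 b0 b1 -[_`_2]/((W k'.+1)`_2) -[(W k')`_2]/((W k')`_2).
  split.
  - by ring.
  - rewrite -!natr1. ring.
  - set x := (W k'.+1)`_2. set z := (W k')`_2.
    transitivity (2%:R * (3%:R * x) - 3%:R * (4%:R * (- 2%:R * (k'.+1%:R - 1) * k'.+1%:R)) - 3%:R * z); first by ring.
    rewrite b2 a2. rewrite -!natr1. ring.
by case: (P k).
Qed.

Definition Qs (l : seq R) : {poly R} := \prod_(a <- l) (1 - a%:P * 'X).
Lemma Qs_props l : [/\ (Qs l)`_0 = 1, (size (Qs l) <= (size l).+1)%N &
   (Qs l)`_1 ^+ 2 - 2%:R * (Qs l)`_2 = \sum_(a <- l) a ^+ 2].
Proof.
elim: l => [|a l [h0 hs h2]]; rewrite /Qs ?big_nil ?big_cons.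
  by rewrite size_poly1 !coef1 /=; split => //; ring.
rewrite -/(Qs l). have e : forall i, ((1 - a%:P * 'X) * Qs l)`_i =
   (Qs l)`_i - a * (if i is j.+1 then (Qs l)`_j else 0).
  by move=> i; rewrite mulrBl mul1r -mulrA coefB coefCM coefXM; case: i.
split.
- by rewrite e h0 /= mulr0 subr0.
- apply: leq_trans (size_mul_leq _ _) _.
  have h : (size ((1 - a%:P * 'X)%R : {poly R}) <= 2)%N.
    apply: leq_trans (size_polyD _ _) _. rewrite size_polyN geq_max size_poly1 /=.
    apply: leq_trans (size_mul_leq _ _) _. rewrite size_polyC size_polyX. by case: (a != 0).
  move: h hs. case: (size _) => [|x]; case: (size _) => [|y] //=; lia.
- rewrite !e h0 -h2. ring.
Qed.
Lemma Qs_root l a : a \in l -> a != 0 -> (Qs l).[a^-1] = 0.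
Proof.
move=> al a0; elim: l al => [|b l IH] //; rewrite in_cons /Qs big_cons -/(Qs l) hornerM.
case/orP => [/eqP eab|/IH ->]; last by rewrite mulr0.
by rewrite -eab !hornerE divff // subrr mul0r.
Qed.


Definition sv n k : R := pow (sin (th n k)) 2.

Lemma sv_pos n k : (k < n)%N -> 0 < sv n k.
Proof.
move=> /ssrnat.ltP h. apply/RltP. rewrite /sv. have := sin_pos n k h. move=> hp.
apply: pow_lt hp.
Qed.

Lemma sv_inj n : {in iota 0 n &, injective (sv n)}.
Proof.
move=> i j; rewrite !mem_iota /= !add0n => hi hj e.
case: (ltngtP i j) => // h.
- by case: (sq_neq n i j (elimT ssrnat.ltP h) (elimT ssrnat.ltP hj)).
- by case: (sq_neq n j i (elimT ssrnat.ltP h) (elimT ssrnat.ltP hi)).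
Qed.

Lemma W_eq_Qs n : W n.+1 = Qs [seq (sv n k)^-1 | k <- iota 0 n].
Proof.
set l := [seq _ | k <- _].
apply/eqP; rewrite -subr_eq0; apply/negPn/negP => nz.
have szP : (size (W n.+1 - Qs l)%R <= n.+1)%N.
  apply: leq_trans (size_polyD _ _) _; rewrite size_polyN geq_max.
  case: (sizeW n) => _ -> /=. case: (Qs_props l) => _ + _. by rewrite size_map size_iota.
set rs := 0 :: [seq sv n k | k <- iota 0 n].
have ur : uniq rs.
  rewrite /rs /= map_inj_in_uniq ?iota_uniq ?andbT; last exact: sv_inj.
  apply/mapP => -[k]; rewrite mem_iota add0n /= => hk e.
  by move: (sv_pos n k hk); rewrite -e ltxx.
have ar : all (root (W n.+1 - Qs l)) rs.
  rewrite /rs /= rootE horner_coef0 coefB.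
  case: (coefW n.+1) => -> _ _; case: (Qs_props l) => -> _ _; rewrite subrr eqxx /=.
  apply/allP => x /mapP [k]; rewrite mem_iota add0n /= => hk ->.
  rewrite rootE hornerD hornerN. rewrite W_root; last exact/ssrnat.ltP.
  rewrite -[sv n k]invrK Qs_root ?subrr //.
    by apply/mapP; exists k => //; rewrite mem_iota add0n.
  by rewrite invr_eq0 gt_eqF // sv_pos.
have := max_poly_roots nz ar ur. rewrite /rs /= size_map size_iota.
by move=> /leq_trans /(_ szP); rewrite ltnn.
Qed.

Lemma sum_eq n : (1 <= n)%N -> sum_f_R0 (fun k => pow (csc (th n k)) 4) (n - 1) =
   (W n.+1)`_1 ^+ 2 - 2%:R * (W n.+1)`_2.
Proof.
move=> hn.
rewrite sum_f_big (_ : (n - 1).+1 = n); last by rewrite subn1 prednK.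
rewrite W_eq_Qs. case: (Qs_props [seq (sv n k)^-1 | k <- iota 0 n]) => _ _ ->.
rewrite big_map /index_iota subn0. apply: eq_big_seq => k; rewrite mem_iota add0n => /andP [_ hk].
rewrite csc4; last by apply: sin_neq0; apply/ssrnat.ltP.
by rewrite RpowE RinvE.
Qed.

Lemma final_val n : (W n.+1)`_1 ^+ 2 - 2%:R * (W n.+1)`_2 =
   8%:R * (n%:R + 1) * n%:R * (n%:R ^+ 2 + n%:R + 1) / 3%:R.
Proof.
case: (coefW n.+1) => _ ->.
set w2 := (W n.+1)`_2 => h2.
have h3 : (3%:R : R) != 0 by rewrite pnatr_eq0.
have -> : w2 = (3%:R * w2) / 3%:R by field.
rewrite h2 -!natr1. field. done.
Qed.

Close Scope ring_scope.
Open Scope R_scope.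

Theorem mainTheorem19 (n : nat) (hn : Peano.le 1 n) :
  sum_f_R0 (fun k => pow (csc ((2 * INR (k + 1) - 1) * PI / (4 * INR n + 2))) 4) (n - 1)
  = 8 * (INR n + 1) * INR n * (pow (INR n) 2 + INR n + 1) / 3.
Proof.
change (fun k => pow (csc ((2 * INR (k + 1) - 1) * PI / (4 * INR n + 2))) 4) with
  (fun k => pow (csc (th n k)) 4).
rewrite sum_eq; last by apply/ssrnat.leP.
rewrite final_val.
rewrite r8I r3I RpowE !INRE /Rdiv RinvE !RplusE !RmultE.
reflexivity.
Qed.
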